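(* Let $K\ge1$, $N=2^K-1$ and $\mu>0$. For the $(N,K)$ binary simplex coded system with node service rate $\mu$, the maximum of $\lambda_1+\dots+\lambda_K$ over all vectors $(\lambda_1,\dots,\lambda_K)$ in its service capacity region equals $2^{K-1}\mu$.
   Context: Binary simplex coded system: $K$ files $f_1,\dots,f_K$ of equal size (elements of a vector space over a field of characteristic $2$) are stored on $N=2^K-1$ nodes indexed by the nonzero vectors $v\in\mathbb{F}_2^K$, node $v$ storing $\sum_{j=1}^K v_jf_j$. Each node has service rate $\mu$. Let $e_i$ be the $i$-th standard basis vector. The recovering sets of file $f_i$ are the systematic node $\{e_i\}$ and the $2^{K-1}-1$ disjoint repair groups $\{v,v+e_i\}$, $v\in\mathbb{F}_2^K\setminus\{0,e_i\}$ (each unordered pair counted once). Requests for $f_i$ arrive at rate $\lambda_i\ge0$. The service capacity region is the set of vectors $(\lambda_1,\dots,\lambda_K)$ for which there exist nonnegative rates assigned to the recovering sets of each $f_i$, summing to $\lambda_i$ for every $i$, such that for every node the total rate assigned to recovering sets containing that node is at most $\mu$. *)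

(* Defs.v *)
From mathcomp Require Import all_boot all_order all_algebra.
Set Implicit Arguments. Unset Strict Implicit. Unset Printing Implicit Defensive.
Import Order.TTheory GRing.Theory Num.Theory.
Local Open Scope ring_scope.

(* Vectors of F_2^K, represented as boolean functions on 'I_K. *)
Definition vec (K : nat) := {ffun 'I_K -> bool}.

Definition zerov (K : nat) : vec K := [ffun _ => false].
Definition addv (K : nat) (u v : vec K) : vec K := [ffun j => u j (+) v j].
Definition ev (K : nat) (i : 'I_K) : vec K := [ffun j => j == i].

(* Recovering sets of file f_i: the systematic node {e_i} and the
   repair groups {v, v + e_i}, v notin {0, e_i} (unordered, counted once
   since they are sets of sets). Nodes are the nonzero vectors. *)
Definition rec_sets (K : nat) (i : 'I_K) : {set {set vec K}} :=
  [set [set ev i]] :|: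
  [set [set v; addv v (ev i)] | v in [set v : vec K | (v != zerov K) && (v != ev i)]].

Definition in_capacity_region (R : realFieldType) (K : nat) (mu : R)
    (lam : 'I_K -> R) : Prop :=
  (forall i, 0 <= lam i) /\
  exists r : 'I_K -> {set vec K} -> R,
    (forall i S, 0 <= r i S) /\
    (forall i, \sum_(S in rec_sets i) r i S = lam i) /\
    (forall u : vec K, u != zerov K ->
       \sum_(i < K) \sum_(S in rec_sets i | u \in S) r i S <= mu).

(* Main.v *)
Require Import Defs.
From mathcomp Require Import all_boot all_order all_algebra.
From mathcomp Require Import zify.
Import Order.TTheory GRing.Theory Num.Theory.
Local Open Scope ring_scope.
Local Notation addv := Defs.addv.
Set Implicit Arguments. Unset Strict Implicit.

Definition par K (v : vec K) : bool := \big[addb/false]_(j < K) v j.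

Lemma par_add K (v w : vec K) : par (addv v w) = par v (+) par w.
Proof. rewrite /par; under eq_bigr do rewrite ffunE; exact: big_split. Qed.

Lemma par_ev K (i : 'I_K) : par (ev i) = true.
Proof.
rewrite /par (bigD1 i) //= ffunE eqxx big1 // => j /negbTE.
by rewrite ffunE => ->.
Qed.

Lemma par_zero K : par (zerov K) = false.
Proof. by rewrite /par big1 // => j _; rewrite ffunE. Qed.

Lemma addvK K (v e : vec K) : addv (addv v e) e = v.
Proof. by apply/ffunP => j; rewrite !ffunE addbK. Qed.

Lemma addv_eq0 K (v e : vec K) : (addv v e == zerov K) = (v == e).
Proof.
apply/eqP/eqP => [H|->].
  apply/ffunP => j; have := congr1 (fun f : vec K => f j) H; rewrite !ffunE.
  by case: (v j); case: (e j).
by apply/ffunP => j; rewrite !ffunE addbb.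
Qed.

Lemma oddS K (i : 'I_K) S : S \in rec_sets i ->
  exists w, forall u, (par u && (u \in S)) = (u == w).
Proof.
rewrite /rec_sets in_setU in_set1 => /orP[/eqP-> | /imsetP[v Hv ->]].
  exists (ev i) => u; rewrite in_set1.
  by case: (eqVneq u (ev i)) => [->|]; rewrite ?par_ev ?andbF.
have hp := par_add v (ev i); rewrite par_ev addbT in hp.
exists (if par v then v else addv v (ev i)) => u; rewrite in_set2.
case pv: (par v) hp => /= hp.
  case: (eqVneq u v) => [->|nuv]; first by rewrite pv.
  by case: (eqVneq u (addv v (ev i))) => [->|]; rewrite ?hp ?andbF.
case: (eqVneq u (addv v (ev i))) => [->|nuv]; first by rewrite hp orbT.
by case: (eqVneq u v) => [->|]; rewrite ?pv ?andbF.
Qed.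

Lemma uniqS K (i : 'I_K) (u : vec K) : u != zerov K ->
  exists Su, forall S, (S \in rec_sets i) && (u \in S) = (S == Su).
Proof.
move=> u0.
exists (if u == ev i then [set ev i] else [set u; addv u (ev i)]) => S.
apply/idP/eqP.
  case/andP; rewrite /rec_sets in_setU in_set1 => /orP[/eqP-> | /imsetP[v Hv ->]].
    by rewrite in_set1 => /eqP->; rewrite eqxx.
  move: Hv; rewrite inE => /andP[v0 ve].
  rewrite in_set2 => /orP[/eqP->|/eqP->]; first by rewrite (negbTE ve).
  have : addv v (ev i) != ev i.
    apply/negP => /eqP H; move: v0; rewrite -(addvK v (ev i)) H.
    by rewrite addv_eq0 eqxx.
  move/negbTE => ->; rewrite addvK.
  by apply/setP => x; rewrite !in_set2 orbC.
move=> ->; case: eqP => [->|/eqP ne].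
  by rewrite /rec_sets in_setU !in_set1 !eqxx.
rewrite in_set2 eqxx andbT /rec_sets in_setU; apply/orP; right.
by apply/imsetP; exists u => //; rewrite inE u0.
Qed.

Lemma sum_id (R : realFieldType) K (r : 'I_K -> {set vec K} -> R) :
  \sum_(i < K) \sum_(S in rec_sets i) r i S =
  \sum_(u : vec K | par u) \sum_(i < K) \sum_(S in rec_sets i | u \in S) r i S.
Proof.
transitivity (\sum_(i < K) \sum_(S in rec_sets i)
                \sum_(u : vec K | par u && (u \in S)) r i S).
  apply: eq_bigr => i _; apply: eq_bigr => S HS.
  have [w Hw] := oddS HS.
  by rewrite (big_pred1 w).
rewrite [RHS]exchange_big /=; apply: eq_bigr => i _.
rewrite (exchange_big_dep (fun u : vec K => par u)) /=; last by move=> S u _ /andP[].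
apply: eq_bigr => u pu; apply: eq_bigl => S; by rewrite pu.
Qed.

Lemma card_par K (i0 : 'I_K) : (\sum_(u : vec K | par u) 1 = 2 ^ K.-1)%N.
Proof.
have inj : injective (fun u : vec K => addv u (ev i0)).
  by apply: (can_inj (g := fun u : vec K => addv u (ev i0))) => u; rewrite addvK.
have E : (\sum_(u : vec K | ~~ par u) 1 = \sum_(u : vec K | par u) 1)%N.
  rewrite (reindex_inj inj) /=; apply: eq_bigl => u.
  by rewrite par_add par_ev addbT negbK.
have T : (\sum_(u : vec K) 1 = 2 ^ K)%N.
  by rewrite sum1_card card_ffun card_bool card_ord.
rewrite (bigID (fun u : vec K => par u)) /= E in T.
have H2 : (2 ^ K = 2 * 2 ^ K.-1)%N.
  by case: K i0 {inj E T} => [[]|k] //= _; rewrite expnS.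
set c := (\sum_(u | par u) 1)%N in T *. lia.
Qed.


Lemma sum_par_const (R : realFieldType) K (i0 : 'I_K) (c : R) :
  \sum_(u : vec K | par u) c = 2%:R ^+ K.-1 * c.
Proof.
transitivity (\sum_(u : vec K | par u) (1%N)%:R * c).
  by apply: eq_bigr => u _; rewrite mul1r.
by rewrite -big_distrl /= -natr_sum (card_par i0) natrX.
Qed.

Theorem lemma3 (R : realFieldType) (K : nat) (mu : R) :
  (1 <= K)%N -> 0 < mu ->
  (exists lam : 'I_K -> R, in_capacity_region mu lam /\
     \sum_(i < K) lam i = 2%:R ^+ K.-1 * mu) /\
  (forall lam : 'I_K -> R, in_capacity_region mu lam ->
     \sum_(i < K) lam i <= 2%:R ^+ K.-1 * mu).
Proof.
move=> HK mu0; set i0 : 'I_K := Ordinal HK.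
split.
  pose r := fun (i : 'I_K) (S : {set vec K}) => if i == i0 then mu else 0.
  have load : forall u : vec K, u != zerov K ->
      \sum_(i < K) \sum_(S in rec_sets i | u \in S) r i S = mu.
    move=> u u0; rewrite (bigD1 i0) //= [X in _ + X]big1 ?addr0; last first.
      by move=> i /negbTE ne; apply: big1 => S _; rewrite /r ne.
    have [Su HSu] := uniqS i0 u0.
    by rewrite (big_pred1 Su) // /r eqxx.
  exists (fun i => \sum_(S in rec_sets i) r i S); split.
    split; first by move=> i; apply: sumr_ge0 => S _; rewrite /r; case: ifP; rewrite // ltW.
    exists r; split; first by move=> i S; rewrite /r; case: ifP; rewrite // ltW.
    split; first by [].
    by move=> u u0; rewrite load.
  rewrite sum_id -(sum_par_const i0); apply: eq_bigr => u pu; apply: load.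
  by apply: contraTneq pu => ->; rewrite par_zero.
move=> lam [_ [r [r0 [Hs Hl]]]].
rewrite (eq_bigr (fun i => \sum_(S in rec_sets i) r i S)); last by move=> i _; rewrite Hs.
rewrite sum_id -(sum_par_const i0); apply: ler_sum => u pu; apply: Hl.
by apply: contraTneq pu => ->; rewrite par_zero.
Qed.
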